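(* Let $P$ be a finite lattice and $f,g\in\mathcal{L}_P$. If $w\in\mathcal{L}_P$ is prime and $w\le f+g$, then there exist prime $u,v\in\mathcal{L}_P$ with $u\le f$, $v\le g$ and $w\le u+v$.
   Context: $P$ is a finite lattice. $\mathcal{L}_P$ is the set of maps $f:P\to P$ satisfying (A.1) $a\le f(a)$; (A.2) $a\le b\Rightarrow f(a)\le f(b)$; (A.3) $f(f(a))=f(a)$, ordered pointwise ($f\le g$ iff $f(a)\le g(a)$ for all $a$); it is a lattice with join $+$. $\Phi f=\{a:f(a)=a\}$. $f$ is prime if $P\setminus\Phi f$ is closed under $\wedge$. *)

(* Defs.v *)
From HB Require Import structures.
From mathcomp Require Import all_boot all_order.
Set Implicit Arguments. Unset Strict Implicit. Unset Printing Implicit Defensive.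
Import Order.Theory.
Local Open Scope order_scope.

Section ClosureOps.
Context {d : Order.disp_t} {P : finTBLatticeType d}.

(* f is in L_P: extensive (A.1), monotone (A.2), idempotent (A.3) *)
Definition closure_op (f : P -> P) : Prop :=
  [/\ forall a, a <= f a,
      forall a b, a <= b -> f a <= f b &
      forall a, f (f a) = f a].

Definition le_op (f g : P -> P) : Prop := forall a, f a <= g a.

Definition join_op (f g : P -> P) : P -> P :=
  fun a => \meet_(x : P | (a <= x) && (f x == x) && (g x == x)) x.

(* Phi f = fixed points; f prime iff P \ Phi f is closed under meet *)
Definition prime_op (f : P -> P) : Prop :=
  forall a b, f a != a -> f b != b -> f (a `&` b) != a `&` b.

End ClosureOps.

(* Main.v *)
Require Import Defs.
From HB Require Import structures.
From mathcomp Require Import all_boot all_order.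
Set Implicit Arguments. Unset Strict Implicit. Unset Printing Implicit Defensive.
Import Order.Theory.
Local Open Scope order_scope.

Section Aux.
Context {d : Order.disp_t} {P : finTBLatticeType d}.

Definition good (S : P -> bool) : Prop :=
  [/\ forall a b, S a -> S b -> S (a `&` b),
      forall a b, ~~ S a -> ~~ S b -> ~~ S (a `&` b) & ~~ S \top].

Definition opof (S : P -> bool) : P -> P :=
  fun a => \meet_(x : P | (a <= x) && ~~ S x) x.

Lemma opof_notS S : good S -> forall a, ~~ S (opof S a).
Proof.
case=> _ HC HT a; rewrite /opof.
apply: (big_ind (fun y => ~~ S y)) => //.
by move=> i /andP[].
Qed.

Lemma opof_ge S a : a <= opof S a.
Proof. by apply/meetsP => i /andP[]. Qed.

Lemma opof_fix S a : ~~ S a -> opof S a = a.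
Proof.
move=> Ha; apply: le_anti; rewrite opof_ge andbT.
by apply: meets_inf; rewrite lexx Ha.
Qed.

Lemma opof_closure S : good S -> closure_op (opof S).
Proof.
move=> G; split.
- exact: opof_ge.
- move=> a b ab; apply/meetsP => i /andP[bi Si].
  by apply: meets_inf; rewrite (le_trans ab bi) Si.
- by move=> a; rewrite opof_fix // opof_notS.
Qed.

Lemma opof_neq S : good S -> forall a, (opof S a != a) = S a.
Proof.
move=> G a; case Sa: (S a).
  apply/eqP => E; have := opof_notS G a; by rewrite E Sa.
by rewrite opof_fix ?Sa ?eqxx.
Qed.

Lemma opof_prime S : good S -> prime_op (opof S).
Proof.
move=> G a b; rewrite !opof_neq // => Sa Sb; case: G => HM _ _; exact: HM.
Qed.

Lemma opof_le S (f : P -> P) : good S -> closure_op f ->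
  (forall x, S x -> f x != x) -> le_op (opof S) f.
Proof.
move=> G [f1 _ f3] Sf a; apply: meets_inf; rewrite f1 /=.
by apply/negP => /Sf; rewrite f3 eqxx.
Qed.

Lemma extend (f : P -> P) (S : P -> bool) (m : P) :
  closure_op f -> f m != m -> good S -> (forall x, S x -> f m <= x) ->
  (forall x, S x -> f x != x) ->
  let S' := fun x => ((m <= x) && ~~ (f m <= x)) || S x in
  [/\ good S', (forall x, S' x -> f x != x) & (forall x, S' x -> m <= x)].
Proof.
move=> [f1 f2 f3] fm [HM HC HT] Sge Sf S'.
have mfm : m <= f m by apply: f1.
have Sm : forall x, S x -> m <= x by move=> x /Sge; apply: le_trans.
split.
- split.
  + move=> a b /orP[/andP[ma nfa]|Sa] /orP[/andP[mb nfb]|Sb]; rewrite /S'.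
    * by rewrite lexI ma mb lexI (negbTE nfa).
    * by rewrite lexI ma (Sm _ Sb) lexI (negbTE nfa).
    * by rewrite lexI mb (Sm _ Sa) lexI (negbTE nfb) andbF.
    * by rewrite HM ?orbT.
  + move=> a b; rewrite /S' !negb_or => /andP[na nSa] /andP[nb nSb].
    rewrite HC // andbT lexI !negb_and negbK.
    move: na nb; rewrite !negb_and !negbK.
    case/orP=> [->|fa]; first by [].
    case/orP=> [->|fb]; first by rewrite orbT.
    by rewrite lexI fa fb orbT.
  + by rewrite /S' !lex1 /= HT.
- move=> x /orP[/andP[mx nfx]|/Sf //].
  apply/eqP => E; move: nfx; by rewrite -E f2.
- by move=> x /orP[/andP[]|/Sm].
Qed.

Lemma good0 : good (fun _ => false).
Proof. by split. Qed.

Lemma cover (f g : P -> P) (N : P -> bool) :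
  closure_op f -> closure_op g ->
  (forall a b, N a -> N b -> N (a `&` b)) ->
  (forall x, N x -> (f x != x) || (g x != x)) ->
  forall n (c : P), (#|[pred x : P | (c <= x)%O]| <= n)%N ->
  exists Su Sv, good Su /\ good Sv /\ (forall x, Su x -> f x != x) /\
    (forall x, Sv x -> g x != x) /\
    (forall x, Su x -> c <= x) /\ (forall x, Sv x -> c <= x) /\
    (forall x, N x -> c <= x -> Su x || Sv x).
Proof.
move=> Cf Cg NM Ncov; elim=> [|n IH] c.
  rewrite leqn0 => /eqP /card0_eq /(_ c); by rewrite inE lexx.
move=> Hc.
case: (pickP [pred x | N x && (c <= x)]) => [x0 /andP[Nx0 cx0]|none]; last first.
  exists (fun _ => false), (fun _ => false); do !split => //; try exact good0.
  by move=> x Nx cx; have := none x; rewrite /= Nx cx.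
set m := \meet_(x | N x && (c <= x)) x.
have mle : forall x, N x -> c <= x -> m <= x.
  by move=> x Nx cx; apply: meets_inf; rewrite Nx cx.
have cm : c <= m by apply/meetsP => i /andP[].
have Nm : N m.
  have -> : m = x0 `&` m by apply/esym/meet_idPr; apply: mle.
  rewrite /m; apply: (big_ind (fun y => N (x0 `&` y))).
  - by rewrite meetx1.
  - move=> x y Nx Ny; rewrite -(meetxx x0) meetACA; exact: NM.
  - by move=> i /andP[Ni _]; apply: NM.
have mnc : forall h : P -> P, closure_op h -> h m != m ->
    (#|[pred x : P | (h m <= x)%O]| <= n)%N.
  move=> h [h1 _ _] hm; rewrite -ltnS; apply: leq_trans Hc.
  apply: proper_card; apply/properP; split.
    apply/subsetP => x; rewrite !inE => hx.
    by apply: le_trans hx; apply: le_trans cm (h1 m).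
  exists m; rewrite !inE ?lexx //.
  apply/negP => hmm; move: hm; by rewrite eq_le hmm h1.
have trans_c : forall (h : P -> P) (S : P -> bool), closure_op h ->
    (forall x, S x -> h m <= x) -> forall x, S x -> c <= x.
  move=> h S [h1 _ _] HS x /HS; apply: le_trans; exact: le_trans cm (h1 m).
have cov_old : forall (h : P -> P) x, closure_op h -> N x -> c <= x ->
    ~~ ((m <= x) && ~~ (h m <= x)) -> h m <= x.
  move=> h x _ Nx cx; rewrite negb_and negbK (mle _ Nx cx) //.
case/orP: (Ncov _ Nm) => [fm|gm].
  have [Su [Sv [GSu [GSv [Suf [Svg [Suc [Svc Scov]]]]]]]] := IH _ (mnc _ Cf fm).
  have [G' Sf' Sm'] := extend Cf fm GSu Suc Suf.
  exists (fun x => ((m <= x) && ~~ (f m <= x)) || Su x), Sv; do !split => //.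
  - by move=> x /Sm'; apply: le_trans.
  - exact: (trans_c _ _ Cf).
  - move=> x Nx cx; case: ((m <= x) && ~~ (f m <= x)) /idP => [//|H].
    by have := Scov x Nx (cov_old _ _ Cf Nx cx (introN idP H)).
have [Su [Sv [GSu [GSv [Suf [Svg [Suc [Svc Scov]]]]]]]] := IH _ (mnc _ Cg gm).
have [G' Sf' Sm'] := extend Cg gm GSv Svc Svg.
exists Su, (fun x => ((m <= x) && ~~ (g m <= x)) || Sv x); do !split => //.
- exact: (trans_c _ _ Cg).
- by move=> x /Sm'; apply: le_trans.
- move=> x Nx cx; case: ((m <= x) && ~~ (g m <= x)) /idP => [|H]; first by rewrite orbT.
  by case/orP: (Scov x Nx (cov_old _ _ Cg Nx cx (introN idP H))) => ->; rewrite ?orbT.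
Qed.

End Aux.

Theorem mainTheorem18 (d : Order.disp_t) (P : finTBLatticeType d)
  (f g w : P -> P) :
  closure_op f -> closure_op g -> closure_op w ->
  prime_op w -> le_op w (join_op f g) ->
  exists u v : P -> P,
    closure_op u /\ closure_op v /\ prime_op u /\ prime_op v /\
    le_op u f /\ le_op v g /\ le_op w (join_op u v).
Proof.
move=> Cf Cg [w1 w2 w3] Pw Hw.
have Ncov : forall x, w x != x -> (f x != x) || (g x != x).
  move=> x; apply: contraR; rewrite negb_or !negbK => /andP[/eqP fx /eqP gx].
  apply/eqP/le_anti; rewrite w1 andbT; apply: le_trans (Hw x) _.
  by apply: meets_inf; rewrite lexx fx gx !eqxx.
have [Su [Sv [GSu [GSv [Suf [Svg [_ [_ Scov]]]]]]]] :=
  cover Cf Cg Pw Ncov (leqnn #|[pred x : P | \bot <= x]|).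
exists (opof Su), (opof Sv); split; first exact: opof_closure.
split; first exact: opof_closure.
split; first exact: opof_prime.
split; first exact: opof_prime.
split; first exact: opof_le.
split; first exact: opof_le.
move=> a; apply/meetsP => x /andP[/andP[ax ux] vx].
have wx : w x = x.
  apply/eqP; apply: contraT => nw.
  move: (Scov x nw (le0x x)); rewrite -(opof_neq GSu) -(opof_neq GSv) ux vx //.
by rewrite -wx; apply: w2.
Qed.
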